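(* Let $\nu_n(x_0,x_1)$ ($n\ge 0$) be any nonvanishing functions and $\bar P_n(x;x_0,x_1)=\nu_n(x_0,x_1)P_n(x;x_0,x_1)$. Then for all $n\ge1$: $$\mathcal{A}_2\bar P_n=\frac{\mathrm{i}\,q^{-\frac14}}{1-x_0^2}\Bigg\{x_0^2\frac{\nu_n(q^{-\frac12}x_0,x_1)}{\nu_{n+1}(x_0,x_1)}\bar P_{n+1}-\frac{\nu_n(q^{\frac12}x_0,x_1)}{\nu_{n-1}(x_0,x_1)}\lambda_n(x_0,x_1)\bar P_{n-1}+\left(x_0^2\frac{\gamma_n(q^{-\frac12}x_0,x_1)}{\lambda_n(q^{-\frac12}x_0,x_1)}\frac{\nu_n(q^{-\frac12}x_0,x_1)}{\nu_n(x_0,x_1)}-\frac{\nu_n(q^{\frac12}x_0,x_1)}{\nu_n(x_0,x_1)}\right)\bar P_n\Bigg\},$$ $$\mathcal{A}_4\bar P_n=\frac{\mathrm{i}\,q^{-\frac14}}{1-x_1^2}\Bigg\{x_1^2\frac{\nu_n(x_0,q^{-\frac12}x_1)}{\nu_{n+1}(x_0,x_1)}\bar P_{n+1}-\frac{\nu_n(x_0,q^{\frac12}x_1)}{\nu_{n-1}(x_0,x_1)}\lambda_n(x_1,x_0)\bar P_{n-1}+\left(x_1^2\frac{\gamma_n(x_0,q^{-\frac12}x_1)}{\lambda_n(q^{-\frac12}x_1,x_0)}\frac{\nu_n(x_0,q^{-\frac12}x_1)}{\nu_n(x_0,x_1)}-\frac{\nu_n(x_0,q^{\frac12}x_1)}{\nu_n(x_0,x_1)}\right)\bar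 P_n\Bigg\},$$ where on the right-hand sides $\bar P_m=\bar P_m(x;x_0,x_1)$.
   Context: Let $q$ be a complex parameter with $0<|q|<1$, with a fixed choice of $q^{1/4}$ and $q^{k/4}:=(q^{1/4})^k$; $x,x_0,x_1$ are variables; $\mathrm{i}=\sqrt{-1}$. Notation: $(y)_n=(y;q)_n=\prod_{i=1}^{n}(1-yq^{i-1})$, $(y_1,\dots,y_k)_n=(y_1)_n\cdots(y_k)_n$. Operators on functions $f(x,x_0,x_1)$: $\eth_0 f(x,x_0,x_1)=f(x,q^{1/2}x_0,x_1)$, $\eth_1 f(x,x_0,x_1)=f(x,x_0,q^{1/2}x_1)$, with inverses defined accordingly; a function written to the left of an operator acts by multiplication after the operator is applied. For $n\ge0$, $$P_n(x;x_0,x_1)=(-1)^nq^{-\frac n2}\frac{\left(q,\frac{q}{x_0^2},\frac{q}{x_1^2}\right)_n}{\left(\frac{q^{n+1}}{x_0^2x_1^2}\right)_n}\sum_{k=0}^{n}q^k\frac{\left(q^{-n},\frac{q^{n+1}}{x_0^2x_1^2}\right)_k}{\left(q,q,\frac{q}{x_0^2},\frac{q}{x_1^2}\right)_k}\left(-q^{\frac12}x,-q^{\frac12}x^{-1}\right)_k$$ (the Askey–Wilson polynomial with parameters $(a,b,c,d)=(-q^{1/2},-q^{1/2},-q^{1/2}/x_0^2,-q^{1/2}/x_1^2)$). For $b\in\{0,1\}$ let $$G_0(x_b;x)=-\frac{1}{1-x_b^2}\eth_b+\frac{(q^{\frac12}x+x_b^2)(q^{\frac12}+x\,x_b^2)}{q^{\frac12}x(1-x_b^2)}\eth_b^{-1},$$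 and $\mathcal{A}_2=\mathrm{i}\,q^{-1/4}G_0(x_0;x)$, $\mathcal{A}_4=\mathrm{i}\,q^{-1/4}G_0(x_1;x)$ (images of the curves $\mathbb{k}_2,\mathbb{k}_4$ of the genus-two skein algebra). Further, $$\gamma_n(x_0,x_1)=\frac{(1-q^n)^2\left(1-\frac{q^n}{x_0^2x_1^2}\right)^2\left(1-\frac{q^n}{x_0^2}\right)^2\left(1-\frac{q^n}{x_1^2}\right)^2}{\left(1-\frac{q^{2n-1}}{x_0^2x_1^2}\right)\left(1-\frac{q^{2n}}{x_0^2x_1^2}\right)^2\left(1-\frac{q^{2n+1}}{x_0^2x_1^2}\right)},\qquad \lambda_n(x_0,x_1)=\frac{q^{-\frac12}(1-q^n)^2\left(1-\frac{q^n}{x_1^2}\right)^2}{x_0^2\left(1-\frac{q^{2n-1}}{x_0^2x_1^2}\right)\left(1-\frac{q^{2n}}{x_0^2x_1^2}\right)}.$$ *)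

(* Defs.v *)
From mathcomp Require Import all_boot all_order all_algebra.
From mathcomp Require Import complex reals.
Set Implicit Arguments. Unset Strict Implicit. Unset Printing Implicit Defensive.
Import Order.TTheory GRing.Theory Num.Theory.
Local Open Scope ring_scope.

(* Throughout, t plays the role of the fixed choice q^{1/4}; so q = t^4,
   q^{1/2} = t^2, q^{-1/2} = t^-2, q^{-1/4} = t^-1, q^{k/4} = t^k. *)

Section Defs.
Variable R : realType.
Local Notation C := R[i].
Variable t : C.

Definition qq : C := t ^+ 4.

Definition qpoch (y : C) (n : nat) : C := \prod_(i < n) (1 - y * qq ^+ i).

Definition Pn (n : nat) (x x0 x1 : C) : C :=
  (-1) ^+ n * t ^- (2 * n)
  * (qpoch qq n * qpoch (qq / x0 ^+ 2) n * qpoch (qq / x1 ^+ 2) n)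
    / qpoch (qq ^+ n.+1 / (x0 ^+ 2 * x1 ^+ 2)) n
  * \sum_(k < n.+1)
      qq ^+ k
      * (qpoch (qq ^- n) k * qpoch (qq ^+ n.+1 / (x0 ^+ 2 * x1 ^+ 2)) k)
        / (qpoch qq k * qpoch qq k * qpoch (qq / x0 ^+ 2) k * qpoch (qq / x1 ^+ 2) k)
      * (qpoch (- (t ^+ 2 * x)) k * qpoch (- (t ^+ 2 / x)) k).

Definition gam (n : nat) (x0 x1 : C) : C :=
  ((1 - qq ^+ n) ^+ 2 * (1 - qq ^+ n / (x0 ^+ 2 * x1 ^+ 2)) ^+ 2
     * (1 - qq ^+ n / x0 ^+ 2) ^+ 2 * (1 - qq ^+ n / x1 ^+ 2) ^+ 2)
  / ((1 - qq ^+ (2 * n).-1 / (x0 ^+ 2 * x1 ^+ 2))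
     * (1 - qq ^+ (2 * n) / (x0 ^+ 2 * x1 ^+ 2)) ^+ 2
     * (1 - qq ^+ (2 * n).+1 / (x0 ^+ 2 * x1 ^+ 2))).

Definition lam (n : nat) (x0 x1 : C) : C :=
  (t ^- 2 * (1 - qq ^+ n) ^+ 2 * (1 - qq ^+ n / x1 ^+ 2) ^+ 2)
  / (x0 ^+ 2 * (1 - qq ^+ (2 * n).-1 / (x0 ^+ 2 * x1 ^+ 2))
     * (1 - qq ^+ (2 * n) / (x0 ^+ 2 * x1 ^+ 2))).

Definition fn3 := C -> C -> C -> C.

Definition eth (b : bool) (f : fn3) : fn3 := fun x x0 x1 =>
  if b then f x x0 (t ^+ 2 * x1) else f x (t ^+ 2 * x0) x1.
Definition ethinv (b : bool) (f : fn3) : fn3 := fun x x0 x1 =>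
  if b then f x x0 (t ^- 2 * x1) else f x (t ^- 2 * x0) x1.

Definition G0 (b : bool) (f : fn3) : fn3 := fun x x0 x1 =>
  let xb := if b then x1 else x0 in
  - (1 - xb ^+ 2)^-1 * eth b f x x0 x1
  + ((t ^+ 2 * x + xb ^+ 2) * (t ^+ 2 + x * xb ^+ 2))
      / (t ^+ 2 * x * (1 - xb ^+ 2)) * ethinv b f x x0 x1.

Definition A2 (f : fn3) : fn3 := fun x x0 x1 => 'i%C * t ^-1 * G0 false f x x0 x1.
Definition A4 (f : fn3) : fn3 := fun x x0 x1 => 'i%C * t ^-1 * G0 true f x x0 x1.

Definition Pbar (nu : nat -> C -> C -> C) (n : nat) : fn3 := fun x x0 x1 =>
  nu n x0 x1 * Pn n x x0 x1.

Definition generic (x0 x1 : C) : Prop :=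
  forall j : int, x0 ^+ 2 != qq ^ j /\ x1 ^+ 2 != qq ^ j /\ x0 ^+ 2 * x1 ^+ 2 != qq ^ j.

End Defs.

(* Main.v *)
Require Import Defs.
From mathcomp Require Import all_boot all_order all_algebra.
From mathcomp Require Import complex reals.
From mathcomp Require Import ring zify.
Import Order.TTheory GRing.Theory Num.Theory.
Local Open Scope ring_scope.

Section Work.
Variable R : realType.
Local Notation C := R[i].
Variable t : C.
Hypothesis ht : 0 < `|t ^+ 4| < 1.

Local Notation qq := (qq t).
Local Notation qpoch := (qpoch t).

Lemma qq_neq0 : qq != 0.
Proof. by case/andP: ht; rewrite normr_gt0. Qed.

Lemma t_neq0 : t != 0.
Proof. by apply: contra_neq qq_neq0 => ->; rewrite /Defs.qq expr0n. Qed.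

Lemma qqX_neq1 M : (0 < M)%N -> 1 - qq ^+ M != 0.
Proof.
move=> M0; rewrite subr_eq0; apply/eqP => h.
case/andP: ht => _ h1.
have : `|qq ^+ M| < 1 by rewrite normrX exprn_ilt1 // -?lt0n.
by rewrite -h normr1 ltxx.
Qed.

Lemma qpR y k : qpoch y k.+1 = qpoch y k * (1 - y * qq ^+ k).
Proof. by rewrite /Defs.qpoch big_ord_recr. Qed.

Lemma qpL y k : qpoch y k.+1 = (1 - y) * qpoch (y * qq) k.
Proof.
rewrite /Defs.qpoch big_ord_recl /= expr0 mulr1; congr (_ * _).
by apply: eq_bigr => i _; rewrite /bump /= exprS mulrA.
Qed.

Lemma qpoch0 y : qpoch y 0 = 1.
Proof. by rewrite /Defs.qpoch big_ord0. Qed.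

Lemma qp_vanish n k : (n < k)%N -> qpoch (qq ^- n) k = 0.
Proof.
move=> lt; rewrite /Defs.qpoch (bigD1 (Ordinal lt)) //= mulVf ?expf_neq0 ?qq_neq0 ?t_neq0 //.
by rewrite subrr mul0r.
Qed.

Lemma qp_neq0 y k : (forall i, (i < k)%N -> 1 - y * qq ^+ i != 0) -> qpoch y k != 0.
Proof.
move=> h; rewrite /Defs.qpoch; apply/prodf_neq0 => i _; exact: h.
Qed.

Definition phi k x := qpoch (- (t ^+ 2 * x)) k * qpoch (- (t ^+ 2 / x)) k.
Definition pre n a b := (-1) ^+ n * t ^- (2 * n)
  * (qpoch qq n * qpoch (qq / a ^+ 2) n * qpoch (qq / b ^+ 2) n)
    / qpoch (qq ^+ n.+1 / (a ^+ 2 * b ^+ 2)) n.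
Definition cf n k a b := qq ^+ k
      * (qpoch (qq ^- n) k * qpoch (qq ^+ n.+1 / (a ^+ 2 * b ^+ 2)) k)
        / (qpoch qq k * qpoch qq k * qpoch (qq / a ^+ 2) k * qpoch (qq / b ^+ 2) k).

Lemma PnE n x a b : Pn t n x a b = pre n a b * \sum_(k < n.+1) cf n k a b * phi k x.
Proof. by []. Qed.

Lemma cf_vanish n k a b : (n < k)%N -> cf n k a b = 0.
Proof. by move=> h; rewrite /cf qp_vanish // mul0r mulr0 mul0r. Qed.

Lemma PnE_ext n p x a b :
  Pn t n x a b = pre n a b * \sum_(k < n.+1 + p) cf n k a b * phi k x.
Proof.
rewrite PnE; congr (_ * _); elim: p => [|p IH]; first by rewrite addn0.
by rewrite IH addnS [RHS]big_ord_recr /= cf_vanish ?mul0r ?addr0 // ltnS leq_addr.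
Qed.


Lemma qpLinv y z k : z = y * qq -> 1 - y != 0 ->
  qpoch z k = qpoch y k * (1 - y * qq ^+ k) / (1 - y).
Proof.
move=> -> hy; have := qpL y k; rewrite qpR => ->.
by field.
Qed.

Lemma qpLinv' y z k : z = y * qq -> 1 - y * qq ^+ k != 0 ->
  qpoch y k = qpoch z k * (1 - y) / (1 - y * qq ^+ k).
Proof.
move=> -> hy; apply: (mulIf hy); have := qpL y k; rewrite qpR => ->.
by field.
Qed.

Lemma gen_lat x0 x1 : generic t x0 x1 -> forall N,
  [/\ x0 ^+ 2 - qq ^+ N != 0, x1 ^+ 2 - qq ^+ N != 0 & x0 ^+ 2 * x1 ^+ 2 - qq ^+ N != 0].
Proof.
move=> hg N; have [h1 [h2 h3]] := hg N.
by rewrite !subr_eq0.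
Qed.

Lemma one_sub_div (a b : C) : b != 0 -> b - a != 0 -> 1 - a / b != 0.
Proof.
move=> hb hab; rewrite (_ : 1 - a / b = (b - a) / b); first by rewrite mulf_neq0 ?invr_eq0.
by field.
Qed.

Lemma one_sub_inv (a : C) : a != 0 -> 1 - a != 0 -> 1 - a^-1 != 0.
Proof.
move=> ha h1; rewrite (_ : 1 - a^-1 = - (1 - a) / a).
  by rewrite mulf_neq0 ?invr_eq0 ?oppr_eq0.
by field.
Qed.

Lemma pw1 m k x0 x1 : x0 != 0 -> x1 != 0 -> generic t x0 x1 ->
  pre m.+1 (t ^+ 2 * x0) x1 * cf m.+1 k (t ^+ 2 * x0) x1
  = pre m.+1 x0 x1 * cf m.+1 k x0 x1 + lam t m.+1 x0 x1 * (pre m x0 x1 * cf m k x0 x1).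
Proof.
move=> hx0 hx1 hg.
have sq : (t ^+ 2 * x0) ^+ 2 = qq * x0 ^+ 2 by rewrite exprMn -exprM.
rewrite /pre /cf /lam sq.
set u := x0 ^+ 2; set v := x1 ^+ 2.
set A := qpoch qq m; set U := qpoch (qq / u) m; set V := qpoch (qq / v) m.
set W := qpoch (qq ^+ m.+1 / (u * v)) m.
set N := qpoch (qq ^- m.+1) k; set Z := qpoch (qq ^+ m.+1 / (u * v)) k.
set P := qpoch qq k; set Uk := qpoch (qq / u) k; set Vk := qpoch (qq / v) k.
have hq := qq_neq0; have htt := t_neq0.
have hu : u != 0 by rewrite expf_neq0.
have hv : v != 0 by rewrite expf_neq0.
have hL := @gen_lat x0 x1 hg.
have e1 : qpoch qq m.+1 = A * (1 - qq * qq ^+ m) by rewrite qpR.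
have e2 : qpoch (qq / (qq * u)) m.+1 = (1 - qq / (qq * u)) * U.
  by rewrite qpL (_ : qq / (qq * u) * qq = qq / u) //; field; rewrite hq hu.
have e3 : qpoch (qq / v) m.+1 = V * (1 - qq / v * qq ^+ m) by rewrite qpR.
have a4 : qq ^+ m.+2 / (qq * u * v) = qq ^+ m.+1 / (u * v) by rewrite exprS; field; rewrite hq hu hv.
have e4 : qpoch (qq ^+ m.+2 / (qq * u * v)) m.+1 = W * (1 - qq ^+ m.+1 / (u * v) * qq ^+ m).
  by rewrite a4 qpR.
have e5 : qpoch (qq ^+ m.+2 / (qq * u * v)) k = Z by rewrite a4.
have e6 : qpoch (qq / (qq * u)) k = Uk * (1 - qq / (qq * u)) / (1 - qq / (qq * u) * qq ^+ k).
  apply: qpLinv'; first by field; rewrite hq hu.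
  rewrite (_ : qq / (qq * u) * qq ^+ k = qq ^+ k / u); last by field; rewrite hq hu.
  by case: (hL k) => ? _ _; apply: one_sub_div.
have e7 : qpoch (qq / u) m.+1 = U * (1 - qq / u * qq ^+ m) by rewrite qpR.
have hy0 : 1 - qq ^+ m.+1 / (u * v) != 0.
  by case: (hL m.+1) => _ _ ?; apply: one_sub_div; rewrite // mulf_neq0.
have a8 : qq ^+ m.+2 / (u * v) = qq ^+ m.+1 / (u * v) * qq.
  by rewrite [qq ^+ m.+2]exprS; field; rewrite hu hv.
have e8 : qpoch (qq ^+ m.+2 / (u * v)) m.+1 =
   W * (1 - qq ^+ m.+1 / (u * v) * qq ^+ m) * (1 - qq ^+ m.+1 / (u * v) * qq ^+ m.+1)
   / (1 - qq ^+ m.+1 / (u * v)).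
  by rewrite (@qpLinv (qq ^+ m.+1 / (u * v))) // qpR.
have e9 : qpoch (qq ^+ m.+2 / (u * v)) k =
   Z * (1 - qq ^+ m.+1 / (u * v) * qq ^+ k) / (1 - qq ^+ m.+1 / (u * v)).
  by rewrite (@qpLinv (qq ^+ m.+1 / (u * v))).
have hqm : 1 - qq ^- m.+1 != 0.
  by apply: one_sub_inv; rewrite ?expf_neq0 ?qqX_neq1.
have e10 : qpoch (qq ^- m) k = N * (1 - qq ^- m.+1 * qq ^+ k) / (1 - qq ^- m.+1).
  apply: qpLinv => //; rewrite exprS invfM; field.
  by rewrite expf_neq0.
rewrite e1 e2 e3 e4 e5 e6 e7 e8 e9 e10.
rewrite (_ : (2 * m.+1).-1 = (2 * m).+1); last by rewrite mulnS.
rewrite (_ : (2 * m.+1)%N = (2 * m).+2); last by rewrite mulnS.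
rewrite !(exprS qq) !(exprS t) (_ : qq ^+ (2 * m)%N = (qq ^+ m) ^+ 2); last by rewrite -exprM mulnC.
rewrite !exprS.
set Q := qq ^+ m; set K := qq ^+ k; set TT := t ^+ (2 * m)%N.
have hK : u - K != 0 by case: (hL k).
have h1 : u - 1 != 0 by case: (hL 0%N); rewrite expr0.
have h2 : u * v - qq * Q != 0 by case: (hL m.+1) => _ _; rewrite [qq ^+ m.+1]exprS.
have h3 : u * v - qq * (Q * Q) != 0.
  by case: (hL (m + m).+1) => _ _; rewrite [qq ^+ (m + m).+1]exprS exprD.
have h4 : u * v - qq * (qq * (Q * Q)) != 0.
  by case: (hL (m + m).+2) => _ _; rewrite [qq ^+ (m + m).+2]exprS [qq ^+ (m + m).+1]exprS exprD.
have h5 : qq * Q - 1 != 0.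
  by rewrite -exprS -oppr_eq0 opprB qqX_neq1.
have hQ : Q != 0 by rewrite expf_neq0.
have hTT : TT != 0 by rewrite expf_neq0.
have hP : P != 0 by apply: qp_neq0 => i _; rewrite -exprS qqX_neq1.
have hVk : Vk != 0.
  by apply: qp_neq0 => i _; rewrite mulrAC -exprS; apply: one_sub_div => //; case: (hL i.+1).
have hUk : Uk != 0.
  by apply: qp_neq0 => i _; rewrite mulrAC -exprS; apply: one_sub_div => //; case: (hL i.+1).
have hW : W != 0.
  apply: qp_neq0 => i _; rewrite mulrAC -exprD; apply: one_sub_div; first by rewrite mulf_neq0.
  by case: (hL (m.+1 + i)%N).
field.
by rewrite hVk hUk hP hQ hq h5 hW hTT hv hu h4 h3 htt h2 hK h1.
Qed.


Definition alp (u K : C) := t ^+ 2 + u ^+ 2 / t ^+ 2 - u / (t ^+ 2 * K) - u * t ^+ 2 * K.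
Definition bet (u K : C) := u / (t ^+ 2 * K).

Lemma pw2 m k x0 x1 : x0 != 0 -> x1 != 0 -> generic t x0 x1 ->
  let n := m.+1 in
  pre n (t ^- 2 * x0) x1 * cf n k.+1 (t ^- 2 * x0) x1 * alp (x0 ^+ 2) (qq ^+ k.+1)
  + pre n (t ^- 2 * x0) x1 * cf n k (t ^- 2 * x0) x1 * bet (x0 ^+ 2) (qq ^+ k)
  = x0 ^+ 2 * (pre n.+1 x0 x1 * cf n.+1 k.+1 x0 x1
      + gam t n (t ^- 2 * x0) x1 / lam t n (t ^- 2 * x0) x1 * (pre n x0 x1 * cf n k.+1 x0 x1)).
Proof.
move=> hx0 hx1 hg n.
have hq := qq_neq0; have htt := t_neq0.
have sq : (t ^- 2 * x0) ^+ 2 = x0 ^+ 2 / qq.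
  by rewrite exprMn exprVn -exprM mulrC.
rewrite /n /pre /cf /lam /gam /alp /bet sq.
set u := x0 ^+ 2; set v := x1 ^+ 2.
have hu : u != 0 by rewrite expf_neq0.
have hv : v != 0 by rewrite expf_neq0.
have hL := @gen_lat x0 x1 hg.
set A := qpoch qq m.+1; set U2 := qpoch (qq / (u / qq)) m.+1; set V := qpoch (qq / v) m.+1.
set W := qpoch (qq ^+ m.+2 / (u / qq * v)) m.+1.
set N := qpoch (qq ^- m.+1) k; set Z := qpoch (qq ^+ m.+2 / (u / qq * v)) k.
set P := qpoch qq k; set Uk := qpoch (qq / (u / qq)) k; set Vk := qpoch (qq / v) k.
have f1 : qpoch (qq ^- m.+1) k.+1 = N * (1 - qq ^- m.+1 * qq ^+ k) by rewrite qpR.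
have f2 : qpoch (qq ^+ m.+2 / (u / qq * v)) k.+1 = Z * (1 - qq ^+ m.+2 / (u / qq * v) * qq ^+ k).
  by rewrite qpR.
have f3 : qpoch qq k.+1 = P * (1 - qq * qq ^+ k) by rewrite qpR.
have f4 : qpoch (qq / (u / qq)) k.+1 = Uk * (1 - qq / (u / qq) * qq ^+ k) by rewrite qpR.
have f5 : qpoch (qq / v) k.+1 = Vk * (1 - qq / v * qq ^+ k) by rewrite qpR.
have f6 : qpoch qq m.+2 = A * (1 - qq * qq ^+ m.+1) by rewrite qpR.
have auq : qq / u * qq = qq / (u / qq) by field; rewrite hu hq.
have f7 : qpoch (qq / u) m.+2 = (1 - qq / u) * U2 by rewrite qpL auq.
have f8 : qpoch (qq / v) m.+2 = V * (1 - qq / v * qq ^+ m.+1) by rewrite qpR.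
have a9 : qq ^+ m.+3 / (u * v) = qq ^+ m.+2 / (u / qq * v).
  by rewrite [qq ^+ m.+3]exprS; field; rewrite hu hv hq.
have f9 : qpoch (qq ^+ m.+3 / (u * v)) m.+2 = W * (1 - qq ^+ m.+2 / (u / qq * v) * qq ^+ m.+1).
  by rewrite a9 qpR.
have f10 : qpoch (qq ^- m.+2) k.+1 = (1 - qq ^- m.+2) * N.
  by rewrite qpL [qq ^+ m.+2]exprS invfM mulrAC mulVf // mul1r.
have f11 : qpoch (qq ^+ m.+3 / (u * v)) k.+1 = Z * (1 - qq ^+ m.+2 / (u / qq * v) * qq ^+ k).
  by rewrite a9 qpR.
have f12 : qpoch (qq / u) k.+1 = (1 - qq / u) * Uk by rewrite qpL auq.
have f13 : qpoch (qq / u) m.+1 = U2 * (1 - qq / u) / (1 - qq / u * qq ^+ m.+1).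
  apply: qpLinv' => //; rewrite mulrAC -exprS; apply: one_sub_div => //.
  by case: (hL m.+2).
have a14 : qq ^+ m.+2 / (u / qq * v) = qq ^+ m.+2 / (u * v) * qq.
  by field; rewrite hu hv hq.
have f14 : qpoch (qq ^+ m.+2 / (u * v)) m.+1 =
    W * (1 - qq ^+ m.+2 / (u * v)) / (1 - qq ^+ m.+2 / (u * v) * qq ^+ m.+1).
  apply: qpLinv' => //; rewrite mulrAC -exprD; apply: one_sub_div; first by rewrite mulf_neq0.
  by case: (hL (m.+2 + m.+1)%N).
have f15 : qpoch (qq ^+ m.+2 / (u * v)) k.+1 = (1 - qq ^+ m.+2 / (u * v)) * Z.
  by rewrite qpL -a14.
rewrite f1 f2 !f3 f4 f5 f6 f7 f8 f9 f10 f11 f12 f13 f14 f15.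
rewrite (_ : (2 * m.+1).-1 = (2 * m).+1)%N; last by rewrite mulnS.
rewrite (_ : (2 * m.+1)%N = (2 * m).+2); last by rewrite mulnS.
rewrite (_ : (2 * m.+2)%N = (2 * m).+4); last by rewrite !mulnS.
rewrite !(exprS qq) !(exprS t) !(exprS (-1)).
rewrite (_ : qq ^+ (2 * m)%N = (t ^+ (2 * m)%N) ^+ 4); last by rewrite -!exprM mulnC.
rewrite (_ : qq ^+ m = (t ^+ (2 * m)%N) ^+ 2); last by rewrite /Defs.qq -!exprM; congr (_ ^+ _); lia.
set K := qq ^+ k; set TT := t ^+ (2 * m)%N.
have t4 : t ^+ 4 = qq by [].
have eK : K = qq ^+ k by [].
have eT2 : TT ^+ 2 = qq ^+ m by rewrite /TT /Defs.qq -!exprM; congr (_ ^+ _); lia.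
have eT4 : TT ^+ 4 = qq ^+ m * qq ^+ m by rewrite -eT2 -exprD.
have g1 : v - qq * K != 0 by rewrite eK -exprS; case: (hL k.+1).
have g2 : u - qq != 0 by case: (hL 1%N); rewrite expr1.
have g3 : 1 - qq * K != 0 by rewrite eK -exprS qqX_neq1.
have g4 : u * v - qq * (qq * TT ^+ 2) * (qq * TT ^+ 2) != 0.
  by rewrite eT2 -!exprS -exprD; case: (hL (m.+2 + m.+1)%N).
have g5 : u * v - qq * (qq * TT ^+ 2) != 0 by rewrite eT2 -!exprS; case: (hL m.+2).
have g6 : u - qq * (qq * TT ^+ 2) != 0 by rewrite eT2 -!exprS; case: (hL m.+2).
have g7 : u * v - (t * TT * t) ^+ 4 != 0.
  by rewrite !exprMn t4 eT4 -exprD -exprS -exprSr; case: (hL (m + m).+2).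
have g8 : v - qq * TT ^+ 2 != 0 by rewrite eT2 -!exprS; case: (hL m.+1).
have g9 : 1 - qq * TT ^+ 2 != 0 by rewrite eT2 -!exprS qqX_neq1.
have g10 : u * v - (t * (t * (t * TT)) * t) ^+ 4 != 0.
  by rewrite !exprMn t4 eT4 -exprD -!exprS -exprSr; case: (hL (m + m).+4).
have g11 : u - (t * t) ^+ 4 * K != 0.
  by rewrite !exprMn t4 eK -mulrA -!exprS; case: (hL k.+2).
have hK : K != 0 by rewrite expf_neq0.
have hTT : TT != 0 by rewrite expf_neq0.
have hP : P != 0 by apply: qp_neq0 => i _; rewrite -exprS qqX_neq1.
have hVk : Vk != 0.
  by apply: qp_neq0 => i _; rewrite mulrAC -exprS; apply: one_sub_div => //; case: (hL i.+1).
have hUk : Uk != 0.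
  apply: qp_neq0 => i _; rewrite (_ : qq / (u / qq) * qq ^+ i = qq ^+ i.+2 / u).
    by apply: one_sub_div => //; case: (hL i.+2).
  by rewrite !exprS; field; rewrite hq hu.
have hW : W != 0.
  apply: qp_neq0 => i _; rewrite (_ : qq ^+ m.+2 / (u / qq * v) * qq ^+ i = qq ^+ (m.+3 + i) / (u * v)).
    by apply: one_sub_div; [rewrite mulf_neq0 | case: (hL (m.+3 + i)%N)].
  by rewrite exprD [qq ^+ m.+3]exprS; field; rewrite hq hu hv.
rewrite /Defs.qq.
field.
rewrite !t4.
by rewrite hv hu g1 hVk hUk g2 g3 hP hTT htt g4 g5 hW g6 g7 g8 g9 g10 hK g11.
Qed.

Lemma pw20 m x0 x1 : x0 != 0 -> x1 != 0 -> generic t x0 x1 ->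
  let n := m.+1 in
  pre n (t ^- 2 * x0) x1 * cf n 0 (t ^- 2 * x0) x1 * alp (x0 ^+ 2) (qq ^+ 0)
  = x0 ^+ 2 * (pre n.+1 x0 x1 * cf n.+1 0 x0 x1
      + gam t n (t ^- 2 * x0) x1 / lam t n (t ^- 2 * x0) x1 * (pre n x0 x1 * cf n 0 x0 x1)).
Proof.
move=> hx0 hx1 hg n.
have hq := qq_neq0; have htt := t_neq0.
have sq : (t ^- 2 * x0) ^+ 2 = x0 ^+ 2 / qq.
  by rewrite exprMn exprVn -exprM mulrC.
rewrite /n /pre /cf /lam /gam /alp /bet sq !qpoch0 !expr0.
set u := x0 ^+ 2; set v := x1 ^+ 2.
have hu : u != 0 by rewrite expf_neq0.
have hv : v != 0 by rewrite expf_neq0.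
have hL := @gen_lat x0 x1 hg.
set A := qpoch qq m.+1; set U2 := qpoch (qq / (u / qq)) m.+1; set V := qpoch (qq / v) m.+1.
set W := qpoch (qq ^+ m.+2 / (u / qq * v)) m.+1.
have f6 : qpoch qq m.+2 = A * (1 - qq * qq ^+ m.+1) by rewrite qpR.
have auq : qq / u * qq = qq / (u / qq) by field; rewrite hu hq.
have f7 : qpoch (qq / u) m.+2 = (1 - qq / u) * U2 by rewrite qpL auq.
have f8 : qpoch (qq / v) m.+2 = V * (1 - qq / v * qq ^+ m.+1) by rewrite qpR.
have a9 : qq ^+ m.+3 / (u * v) = qq ^+ m.+2 / (u / qq * v).
  by rewrite [qq ^+ m.+3]exprS; field; rewrite hu hv hq.
have f9 : qpoch (qq ^+ m.+3 / (u * v)) m.+2 = W * (1 - qq ^+ m.+2 / (u / qq * v) * qq ^+ m.+1).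
  by rewrite a9 qpR.
have f13 : qpoch (qq / u) m.+1 = U2 * (1 - qq / u) / (1 - qq / u * qq ^+ m.+1).
  apply: qpLinv' => //; rewrite mulrAC -exprS; apply: one_sub_div => //.
  by case: (hL m.+2).
have a14 : qq ^+ m.+2 / (u / qq * v) = qq ^+ m.+2 / (u * v) * qq.
  by field; rewrite hu hv hq.
have f14 : qpoch (qq ^+ m.+2 / (u * v)) m.+1 =
    W * (1 - qq ^+ m.+2 / (u * v)) / (1 - qq ^+ m.+2 / (u * v) * qq ^+ m.+1).
  apply: qpLinv' => //; rewrite mulrAC -exprD; apply: one_sub_div; first by rewrite mulf_neq0.
  by case: (hL (m.+2 + m.+1)%N).
rewrite f6 f7 f8 f9 f13 f14.
rewrite (_ : (2 * m.+1).-1 = (2 * m).+1)%N; last by rewrite mulnS.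
rewrite (_ : (2 * m.+1)%N = (2 * m).+2); last by rewrite mulnS.
rewrite (_ : (2 * m.+2)%N = (2 * m).+4); last by rewrite !mulnS.
rewrite !(exprS qq) !(exprS t) !(exprS (-1)).
rewrite (_ : qq ^+ (2 * m)%N = (t ^+ (2 * m)%N) ^+ 4); last by rewrite -!exprM mulnC.
rewrite (_ : qq ^+ m = (t ^+ (2 * m)%N) ^+ 2); last by rewrite /Defs.qq -!exprM; congr (_ ^+ _); lia.
set TT := t ^+ (2 * m)%N.
have t4 : t ^+ 4 = qq by [].
have eT2 : TT ^+ 2 = qq ^+ m by rewrite /TT /Defs.qq -!exprM; congr (_ ^+ _); lia.
have eT4 : TT ^+ 4 = qq ^+ m * qq ^+ m by rewrite -eT2 -exprD.
have g2 : u - qq != 0 by case: (hL 1%N); rewrite expr1.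
have g4 : u * v - qq * (qq * TT ^+ 2) * (qq * TT ^+ 2) != 0.
  by rewrite eT2 -!exprS -exprD; case: (hL (m.+2 + m.+1)%N).
have g5 : u * v - qq * (qq * TT ^+ 2) != 0 by rewrite eT2 -!exprS; case: (hL m.+2).
have g6 : u - qq * (qq * TT ^+ 2) != 0 by rewrite eT2 -!exprS; case: (hL m.+2).
have g7 : u * v - (t * TT * t) ^+ 4 != 0.
  by rewrite !exprMn t4 eT4 -exprD -exprS -exprSr; case: (hL (m + m).+2).
have g8 : v - qq * TT ^+ 2 != 0 by rewrite eT2 -!exprS; case: (hL m.+1).
have g9 : 1 - qq * TT ^+ 2 != 0 by rewrite eT2 -!exprS qqX_neq1.
have g10 : u * v - (t * (t * (t * TT)) * t) ^+ 4 != 0.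
  by rewrite !exprMn t4 eT4 -exprD -!exprS -exprSr; case: (hL (m + m).+4).
have hTT : TT != 0 by rewrite expf_neq0.
have hW : W != 0.
  apply: qp_neq0 => i _; rewrite (_ : qq ^+ m.+2 / (u / qq * v) * qq ^+ i = qq ^+ (m.+3 + i) / (u * v)).
    by apply: one_sub_div; [rewrite mulf_neq0 | case: (hL (m.+3 + i)%N)].
  by rewrite exprD [qq ^+ m.+3]exprS; field; rewrite hq hu hv.
rewrite /Defs.qq.
field.
rewrite !t4.
by rewrite hv hu g4 g5 hW g6 hTT htt g7 g8 g9 g10.
Qed.


Lemma ID1 m x x0 x1 : x0 != 0 -> x1 != 0 -> generic t x0 x1 ->
  Pn t m.+1 x (t ^+ 2 * x0) x1 = Pn t m.+1 x x0 x1 + lam t m.+1 x0 x1 * Pn t m x x0 x1.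
Proof.
move=> hx0 hx1 hg.
rewrite (PnE_ext m 1) addn1 !PnE !big_distrr -big_split /=.
apply: eq_bigr => k _.
have h := @pw1 m k x0 x1 hx0 hx1 hg.
by rewrite mulrA h; ring.
Qed.

Lemma phiS k x : phi k.+1 x = phi k x * ((1 + t ^+ 2 * x * qq ^+ k) * (1 + t ^+ 2 / x * qq ^+ k)).
Proof. rewrite /phi !qpR; ring. Qed.

Lemma Mphi k x u : x != 0 ->
  (t ^+ 2 * x + u) * (t ^+ 2 + x * u) / (t ^+ 2 * x) * phi k x
  = alp u (qq ^+ k) * phi k x + bet u (qq ^+ k) * phi k.+1 x.
Proof.
move=> hx; rewrite phiS /alp /bet.
have htt := t_neq0; have hK : qq ^+ k != 0 by rewrite expf_neq0 // qq_neq0.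
by field; rewrite hK htt hx.
Qed.

Lemma sum_shift N (F G H phi : nat -> C) :
  F 0%N = H 0%N -> (forall k, F k.+1 + G k = H k.+1) -> G N = 0 ->
  \sum_(k < N.+1) F k * phi k + \sum_(k < N.+1) G k * phi k.+1
  = \sum_(k < N.+1) H k * phi k.
Proof.
move=> h0 hS hN.
rewrite big_ord_recl [X in _ + X]big_ord_recr [RHS]big_ord_recl /= hN mul0r addr0 h0.
rewrite -addrA; congr (_ + _); rewrite -big_split; apply: eq_bigr => i _ /=.
by rewrite /bump /= add1n -mulrDl hS.
Qed.

Lemma ID2 m x x0 x1 : x != 0 -> x0 != 0 -> x1 != 0 -> generic t x0 x1 ->
  (t ^+ 2 * x + x0 ^+ 2) * (t ^+ 2 + x * x0 ^+ 2) / (t ^+ 2 * x) * Pn t m.+1 x (t ^- 2 * x0) x1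
  = x0 ^+ 2 * (Pn t m.+2 x x0 x1
       + gam t m.+1 (t ^- 2 * x0) x1 / lam t m.+1 (t ^- 2 * x0) x1 * Pn t m.+1 x x0 x1).
Proof.
move=> hx hx0 hx1 hg.
rewrite (PnE_ext _ 1) addn1 (PnE m.+2) (PnE_ext m.+1 1) addn1.
set M := _ / (t ^+ 2 * x).
set g := gam _ _ _ _ / _.
set pr := pre m.+1 (t ^- 2 * x0) x1.
transitivity (\sum_(k < m.+3) (pr * cf m.+1 k (t ^- 2 * x0) x1 * alp (x0 ^+ 2) (qq ^+ k)) * phi k x
   + \sum_(k < m.+3) (pr * cf m.+1 k (t ^- 2 * x0) x1 * bet (x0 ^+ 2) (qq ^+ k)) * phi k.+1 x).
  rewrite !big_distrr -big_split /=; apply: eq_bigr => k _.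
  have h := @Mphi k x (x0 ^+ 2) hx.
  transitivity (pr * cf m.+1 k (t ^- 2 * x0) x1 * (M * phi k x)); first by rewrite /M; ring.
  by rewrite /M h; ring.
rewrite (@sum_shift m.+2 (fun k => pr * cf m.+1 k (t ^- 2 * x0) x1 * alp (x0 ^+ 2) (qq ^+ k))
  (fun k => pr * cf m.+1 k (t ^- 2 * x0) x1 * bet (x0 ^+ 2) (qq ^+ k)) (fun k => x0 ^+ 2 * (pre m.+2 x0 x1 * cf m.+2 k x0 x1
      + g * (pre m.+1 x0 x1 * cf m.+1 k x0 x1))) (fun k => phi k x)).
- rewrite !big_distrr -big_split big_distrr /=; apply: eq_bigr => k _; ring.
- exact: (@pw20 m x0 x1 hx0 hx1 hg).
- move=> k; exact: (@pw2 m k x0 x1 hx0 hx1 hg).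
- by rewrite cf_vanish // mulr0 mul0r.
Qed.


Lemma Pn_sym n x a b : Pn t n x a b = Pn t n x b a.
Proof.
rewrite !PnE /pre /cf [b ^+ 2 * a ^+ 2]mulrC; congr (_ * _); first by rewrite [qpoch qq n * _ * _]mulrAC.
by apply: eq_bigr => k _; rewrite [qpoch qq k * qpoch qq k * _ * _]mulrAC.
Qed.

Lemma gam_sym n a b : gam t n a b = gam t n b a.
Proof. by rewrite /gam [b ^+ 2 * a ^+ 2]mulrC [X in X / _ = _]mulrAC. Qed.

Lemma gen_sym a b : generic t a b -> generic t b a.
Proof. by move=> h j; case: (h j) => [h1 [h2 h3]]; rewrite mulrC. Qed.

End Work.

Theorem mainTheorem4 (R : realType) (t : R[i]) (nu : nat -> R[i] -> R[i] -> R[i]) :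
  0 < `|t ^+ 4| < 1 ->
  (forall (m : nat) (a b : R[i]), nu m a b != 0) ->
  forall (n : nat) (x x0 x1 : R[i]),
    (1 <= n)%N -> x != 0 -> x0 != 0 -> x1 != 0 -> generic t x0 x1 ->
    A2 t (Pbar t nu n) x x0 x1 =
      'i%C * t ^-1 / (1 - x0 ^+ 2) *
      ( x0 ^+ 2 * nu n (t ^- 2 * x0) x1 / nu n.+1 x0 x1 * Pbar t nu n.+1 x x0 x1
        - nu n (t ^+ 2 * x0) x1 / nu n.-1 x0 x1 * lam t n x0 x1 * Pbar t nu n.-1 x x0 x1
        + (x0 ^+ 2 * (gam t n (t ^- 2 * x0) x1 / lam t n (t ^- 2 * x0) x1)
             * (nu n (t ^- 2 * x0) x1 / nu n x0 x1)
           - nu n (t ^+ 2 * x0) x1 / nu n x0 x1) * Pbar t nu n x x0 x1 )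
    /\
    A4 t (Pbar t nu n) x x0 x1 =
      'i%C * t ^-1 / (1 - x1 ^+ 2) *
      ( x1 ^+ 2 * nu n x0 (t ^- 2 * x1) / nu n.+1 x0 x1 * Pbar t nu n.+1 x x0 x1
        - nu n x0 (t ^+ 2 * x1) / nu n.-1 x0 x1 * lam t n x1 x0 * Pbar t nu n.-1 x x0 x1
        + (x1 ^+ 2 * (gam t n x0 (t ^- 2 * x1) / lam t n (t ^- 2 * x1) x0)
             * (nu n x0 (t ^- 2 * x1) / nu n x0 x1)
           - nu n x0 (t ^+ 2 * x1) / nu n x0 x1) * Pbar t nu n x x0 x1 ).
Proof.
move=> ht hnu n x x0 x1 hn hx hx0 hx1 hg; case: n hn => [//|m _].
rewrite /A2 /A4 /G0 /eth /ethinv /Pbar /=.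
have htt : t != 0 by apply: (@t_neq0 R t ht).
have hu1 : 1 - x0 ^+ 2 != 0.
  by case: (@gen_lat R t x0 x1 hg 0) => h _ _; rewrite -oppr_eq0 opprB -(expr0 (Defs.qq t)).
have hv1 : 1 - x1 ^+ 2 != 0.
  by case: (@gen_lat R t x0 x1 hg 0) => _ h _; rewrite -oppr_eq0 opprB -(expr0 (Defs.qq t)).
have hg' := @gen_sym R t x0 x1 hg.
split.
- have E1 := @ID1 R t ht m x x0 x1 hx0 hx1 hg.
  have E2 := @ID2 R t ht m x x0 x1 hx hx0 hx1 hg.
  set P' := Pn t m.+1 x (t ^- 2 * x0) x1 in E2 *.
  set c := (t ^+ 2 * x + x0 ^+ 2) * (t ^+ 2 + x * x0 ^+ 2) in E2 *.
  rewrite (_ : c / (t ^+ 2 * x * (1 - x0 ^+ 2)) * (nu m.+1 (t ^- 2 * x0) x1 * P')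
     = nu m.+1 (t ^- 2 * x0) x1 / (1 - x0 ^+ 2) * (c / (t ^+ 2 * x) * P')); last first.
    by field; rewrite htt hx hu1.
  have -> : c / (t ^+ 2 * x) * P' = x0 ^+ 2 * (Pn t m.+2 x x0 x1
     + gam t m.+1 (t ^- 2 * x0) x1 / lam t m.+1 (t ^- 2 * x0) x1 * Pn t m.+1 x x0 x1) by exact: E2.
  have -> : Pn t m.+1 x (t ^+ 2 * x0) x1 = Pn t m.+1 x x0 x1 + lam t m.+1 x0 x1 * Pn t m x x0 x1.
    exact: E1.
  set g := gam _ _ _ _ / lam _ _ _ _.
  field.
  by rewrite !hnu hu1 htt.
- have E1 := @ID1 R t ht m x x1 x0 hx1 hx0 hg'.
  have E2 := @ID2 R t ht m x x1 x0 hx hx1 hx0 hg'.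
  rewrite !(@Pn_sym R t _ _ _ x0) (@gam_sym R t _ _ x0) in E1 E2.
  set P' := Pn t m.+1 x x0 (t ^- 2 * x1) in E2 *.
  set c := (t ^+ 2 * x + x1 ^+ 2) * (t ^+ 2 + x * x1 ^+ 2) in E2 *.
  rewrite (_ : c / (t ^+ 2 * x * (1 - x1 ^+ 2)) * (nu m.+1 x0 (t ^- 2 * x1) * P')
     = nu m.+1 x0 (t ^- 2 * x1) / (1 - x1 ^+ 2) * (c / (t ^+ 2 * x) * P')); last first.
    by field; rewrite htt hx hv1.
  have -> : c / (t ^+ 2 * x) * P' = x1 ^+ 2 * (Pn t m.+2 x x0 x1
     + gam t m.+1 x0 (t ^- 2 * x1) / lam t m.+1 (t ^- 2 * x1) x0 * Pn t m.+1 x x0 x1) by exact: E2.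
  have -> : Pn t m.+1 x x0 (t ^+ 2 * x1) = Pn t m.+1 x x0 x1 + lam t m.+1 x1 x0 * Pn t m x x0 x1.
    exact: E1.
  set g := gam _ _ _ _ / lam _ _ _ _.
  field.
  by rewrite !hnu hv1 htt.
Qed.
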